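(* Let $\mathfrak A,\mathfrak B\in K_{\overline\alpha}$ with $\mathfrak A\le\mathfrak B$. Assume $(\mathfrak B,\mathfrak C)$ is an essential minimal pair and let $\gamma=-\delta(\mathfrak C/\mathfrak B)$. Then: (1) there is $\mathfrak D\in K_{\overline\alpha}$ with $\mathfrak B\subseteq\mathfrak D$, $\mathfrak A\le\mathfrak D$ and $0\le\delta(\mathfrak D/\mathfrak A)<\gamma$, such that moreover, for every minimal pair $(\mathfrak B,\mathfrak G)$ with $|G|<|C|$, $\mathfrak G$ does not embed into $\mathfrak D$ over $\mathfrak B$; (2) if $\delta(\mathfrak A)\ge\gamma$, then there is $\mathfrak D\in K_{\overline\alpha}$ with $\mathfrak B\subseteq\mathfrak D$ such that $(\mathfrak A,\mathfrak D)$ is an essential minimal pair satisfying $0>\delta(\mathfrak D/\mathfrak A)\ge-\gamma$.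
   Context: Fix a finite relational language $L$ in which every relation symbol has arity at least $2$. $K_L$ is the class of all finite $L$-structures (including the empty one) in which every relation symbol is interpreted symmetrically and irreflexively. Fix $\overline\alpha:L\to(0,1]$, writing $\overline\alpha_E=\overline\alpha(E)$, such that it is not the case that all symbols of $L$ are binary and $\overline\alpha_E=1$ for all $E$. For $\mathfrak A\in K_L$ let $N_E(\mathfrak A)$ be the number of subsets of $A$ on which $E$ holds and $\delta(\mathfrak A)=|A|-\sum_{E}\overline\alpha_E N_E(\mathfrak A)$. $K_{\overline\alpha}=\{\mathfrak A\in K_L:\delta(\mathfrak A')\ge0\text{ for all substructures }\mathfrak A'\subseteq\mathfrak A\}$. Subsets are identified with induced substructures; for substructures $X,Y$ of a common structure, $\delta(X/Y)=\delta(X\cup Y)-\delta(Y)$. For $\mathfrak A\subseteq\mathfrak B$, $\mathfrak A\le\mathfrak B$ means $\delta(\mathfrak A)\le\delta(\mathfrak A')$ for all $\mathfrak A\subseteq\mathfrak A'\subseteq\mathfrak B$; $(\mathfrak A,\mathfrak B)$ is a minimal pair if $\mathfrak A\subseteq\mathfrak B$, $\mathfrak A\le\mathfrak C$ for all $\mathfrak A\subseteq\mathfrak C\subsetneq\mathfrak B$, but $\mathfrak A\not\le\mathfrak B$. For $\mathfrak B\in K_{\overline\alpha}$ with $\delta(\mathfrak B)>0$, a structure $\mathfrak D\in K_{\overline\alpha}$ with $\mathfrak B\subseteq\mathfrak D$ forms an essential minimal pair $(\mathfrak B,\mathfrak D)$ if $(\mathfrak B,\mathfrak D)$ is a minimal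 pair and $\delta(\mathfrak D'/\mathfrak D'\cap\mathfrak B)\ge0$ for every substructure $\mathfrak D'\subsetneq\mathfrak D$. *)

(* Defs.v *)
From HB Require Import structures.
From mathcomp Require Import all_boot all_order all_algebra.
From mathcomp Require Import finmap.
From mathcomp Require Import reals.
Set Implicit Arguments. Unset Strict Implicit. Unset Printing Implicit Defensive.
Import Order.TTheory GRing.Theory Num.Theory.
Local Open Scope fset_scope.
Local Open Scope ring_scope.

(* Since every relation is symmetric and irreflexive (holds only on tuples
   of pairwise distinct elements, invariant under permutation), the
   interpretation of a symbol E of arity (ar E) is recorded as the set of
   (ar E)-element subsets of the universe on which E holds. *)
Record struct (L : finType) := Struct {
  dom : {fset nat};
  rel : L -> {fset {fset nat}} }.

Section Defs.
Variables (L : finType) (ar : L -> nat) (R : realType) (alpha : L -> R).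

Definition wf (S : struct L) : Prop :=
  forall E s, s \in rel S E -> s `<=` dom S /\ #|` s| = ar E.

Definition induced (S : struct L) (X : {fset nat}) : struct L :=
  Struct X (fun E => [fset s | s in rel S E & s `<=` X]).

Definition sub (A B : struct L) : Prop :=
  dom A `<=` dom B /\ forall E, rel A E = [fset s | s in rel B E & s `<=` dom A].

Definition N (S : struct L) (E : L) : nat := #|` rel S E|.

Definition delta (S : struct L) : R :=
  (#|` dom S|)%:R - \sum_(E : L) alpha E * (N S E)%:R.

Definition deltaRel (S : struct L) (X Y : {fset nat}) : R :=
  delta (induced S (X `|` Y)) - delta (induced S Y).

Definition inK (S : struct L) : Prop :=
  wf S /\ forall X, X `<=` dom S -> 0 <= delta (induced S X).

Definition le (A B : struct L) : Prop :=
  sub A B /\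
  forall X, dom A `<=` X -> X `<=` dom B -> delta A <= delta (induced B X).

Definition minpair (A B : struct L) : Prop :=
  [/\ sub A B,
      (forall X, dom A `<=` X -> X `<` dom B -> le A (induced B X))
    & ~ le A B].

Definition essential (B D : struct L) : Prop :=
  [/\ inK B /\ 0 < delta B, inK D, sub B D,
      minpair B D
    & forall X, X `<` dom D -> 0 <= deltaRel D X (X `&` dom B)].

Definition embeds_over (B G D : struct L) : Prop :=
  exists f : nat -> nat,
    [/\ {in dom G &, injective f},
        (forall x, x \in dom B -> f x = x),
        (forall x, x \in dom G -> f x \in dom D)
      & (forall E s, s `<=` dom G -> (s \in rel G E) = ((f @` s) \in rel D E))].

End Defs.

(* Main.v *)
Require Import Defs.
From HB Require Import structures.
From mathcomp Require Import all_boot all_order all_algebra.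
From mathcomp Require Import finmap.
From mathcomp Require Import reals.
From mathcomp Require Import ring lra.
Import Order.TTheory GRing.Theory Num.Theory.
Local Open Scope fset_scope.
Local Open Scope ring_scope.
Set Implicit Arguments. Unset Strict Implicit. Unset Printing Implicit Defensive.

Section H.
Variables (L : finType) (ar : L -> nat) (R : realType) (alpha : L -> R).
Hypothesis alpha_ge0 : forall E, 0 <= alpha E.

Definition filt (r : {fset {fset nat}}) (X : {fset nat}) := [fset s | s in r & s `<=` X].

Lemma in_filt r X s : (s \in filt r X) = (s \in r) && (s `<=` X).
Proof. by rewrite /filt !inE. Qed.

Definition d (S : struct L) (X : {fset nat}) : R :=
  (#|` X|)%:R - \sum_(E : L) alpha E * (#|` filt (Defs.rel S E) X|)%:R.

Lemma deltaE S X : delta alpha (induced S X) = d S X.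
Proof. by []. Qed.

Lemma filt_filt r X Y : X `<=` Y -> filt (filt r Y) X = filt r X.
Proof.
move=> XY; apply/fsetP => s; rewrite !in_filt.
case: (boolP (s `<=` X)) => sX; rewrite ?andbF // !andbT.
by rewrite (fsubset_trans sX XY) andbT.
Qed.

Lemma filt_sub (A S : struct L) Z : sub A S -> Z `<=` dom A ->
  forall E, filt (Defs.rel A E) Z = filt (Defs.rel S E) Z.
Proof. by move=> [_ h] ZA E; rewrite h; apply: filt_filt. Qed.

Lemma d_sub (A S : struct L) Z : sub A S -> Z `<=` dom A -> d A Z = d S Z.
Proof.
move=> h ZA; rewrite /d; congr (_ - _); apply: eq_bigr => E _.
by rewrite (filt_sub h ZA).
Qed.

Lemma delta_sub (A S : struct L) : sub A S -> delta alpha A = d S (dom A).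
Proof.
move=> [_ h]; rewrite /delta /d /N; congr (_ - _); apply: eq_bigr => E _.
by rewrite h.
Qed.

Lemma sub_refl (S : struct L) : wf ar S -> sub S S.
Proof.
move=> w; split; first exact: fsubset_refl.
move=> E; apply/fsetP => s; rewrite -/(filt _ _) in_filt.
by case: (boolP (s \in Defs.rel S E)) => // /w [].
Qed.

Lemma sub_trans (A B C : struct L) : sub A B -> sub B C -> sub A C.
Proof.
move=> [AB hA] [BC hB]; split; first exact: fsubset_trans AB BC.
by move=> E; rewrite hA hB -!/(filt _ _) filt_filt.
Qed.

Lemma induced_sub (S : struct L) X : X `<=` dom S -> sub (induced S X) S.
Proof. by move=> XS; split. Qed.

Lemma sub_induced (A D : struct L) X : sub A D -> dom A `<=` X -> X `<=` dom D ->
  sub A (induced D X).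
Proof.
move=> [AD hA] AX XD; split => // E.
by rewrite hA /= -!/(filt _ _) filt_filt.
Qed.

Lemma d_induced (S : struct L) X Y : Y `<=` X -> d (induced S X) Y = d S Y.
Proof.
move=> YX; rewrite /d; congr (_ - _); apply: eq_bigr => E _.
by rewrite /= -!/(filt _ _) filt_filt.
Qed.

Lemma submod (S : struct L) U V : d S (U `|` V) + d S (U `&` V) <= d S U + d S V.
Proof.
rewrite /d.
have cE : (#|` U `|` V|)%:R + (#|` U `&` V|)%:R = (#|` U|)%:R + (#|` V|)%:R :> R.
  by rewrite -!natrD cardfsUI.
suff: \sum_E alpha E * (#|` filt (Defs.rel S E) U|)%:R +
      \sum_E alpha E * (#|` filt (Defs.rel S E) V|)%:R <=
      \sum_E alpha E * (#|` filt (Defs.rel S E) (U `|` V)|)%:R +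
      \sum_E alpha E * (#|` filt (Defs.rel S E) (U `&` V)|)%:R.
  move=> h.
  have -> : (#|` U `|` V|)%:R - \sum_E alpha E * (#|` filt (Defs.rel S E) (U `|` V)|)%:R +
   ((#|` U `&` V|)%:R - \sum_E alpha E * (#|` filt (Defs.rel S E) (U `&` V)|)%:R) =
   ((#|` U `|` V|)%:R + (#|` U `&` V|)%:R) - (\sum_E alpha E * (#|` filt (Defs.rel S E) (U `|` V)|)%:R + \sum_E alpha E * (#|` filt (Defs.rel S E) (U `&` V)|)%:R) by ring.
  have -> : (#|` U|)%:R - \sum_E alpha E * (#|` filt (Defs.rel S E) U|)%:R +
   ((#|` V|)%:R - \sum_E alpha E * (#|` filt (Defs.rel S E) V|)%:R) =
   ((#|` U|)%:R + (#|` V|)%:R) - (\sum_E alpha E * (#|` filt (Defs.rel S E) U|)%:R + \sum_E alpha E * (#|` filt (Defs.rel S E) V|)%:R) by ring.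
  by rewrite cE lerD2l lerN2.
rewrite -!big_split /=; apply: ler_sum => E _; rewrite -!mulrDr.
apply: ler_wpM2l => //; rewrite -!natrD ler_nat.
set fU := filt _ U; set fV := filt _ V.
have e1 : fU `&` fV = filt (Defs.rel S E) (U `&` V).
  apply/fsetP => s; rewrite in_fsetI !in_filt.
  by rewrite (fsubsetI) andbACA andbb.
rewrite -cardfsUI e1 leq_add2r fsubset_leq_card //.
apply/fsubsetP => s; rewrite /fU /fV in_fsetU !in_filt => /orP[/andP[-> h]|/andP[-> h]] /=.
  exact: fsubset_trans h (fsubsetUl _ _).
exact: fsubset_trans h (fsubsetUr _ _).
Qed.

Lemma imfset_inj_sub (f : nat -> nat) (D s t : {fset nat}) :
  {in D &, injective f} -> s `<=` D -> t `<=` D -> f @` s = f @` t -> s = t.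
Proof.
move=> inj sD tD e.
have H : forall u v : {fset nat}, u `<=` D -> v `<=` D -> f @` u = f @` v -> u `<=` v.
  move=> u v uD vD euv; apply/fsubsetP => x xu.
  have : f x \in f @` v by rewrite -euv; apply/imfsetP; exists x.
  case/imfsetP => y yv /= fxy.
  have -> : x = y by apply: inj => //; [exact: (fsubsetP uD) | exact: (fsubsetP vD)].
  done.
by apply/eqP; rewrite eqEfsubset (H s t) ?(H t s).
Qed.

Lemma card_inj (f : nat -> nat) (D s : {fset nat}) :
  {in D &, injective f} -> s `<=` D -> #|` f @` s| = #|` s|.
Proof.
move=> inj sD; apply/eqP/card_in_imfsetP => x y xs ys.
by apply: inj; rewrite ?(fsubsetP sD).
Qed.

Lemma d_iso (S T : struct L) (f : nat -> nat) W :
  {in dom S &, injective f} ->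
  (forall E s, s `<=` dom S -> (s \in Defs.rel S E) = (f @` s \in Defs.rel T E)) ->
  W `<=` dom S -> d S W = d T (f @` W).
Proof.
move=> inj hrel WS; rewrite /d (card_inj inj WS); congr (_ - _).
apply: eq_bigr => E _; congr (_ * _%:R).
have -> : filt (Defs.rel T E) (f @` W) = (fun s : {fset nat} => f @` s) @` filt (Defs.rel S E) W.
  apply/fsetP => t; apply/idP/idP.
    rewrite in_filt => /andP[tT tW].
    pose s := [fset x in W | f x \in t].
    have sW : s `<=` W by apply/fsubsetP => x; rewrite !inE => /andP[].
    have est : f @` s = t.
      apply/eqP; rewrite eqEfsubset; apply/andP; split.
        by apply/fsubsetP => y /imfsetP [x /=]; rewrite !inE => /andP[_ h] ->.
      apply/fsubsetP => y yt; have /imfsetP [x xW exy] := fsubsetP tW y yt.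
      by apply/imfsetP; exists x => //=; rewrite !inE xW -exy yt.
    apply/imfsetP; exists s => //; rewrite in_filt sW andbT.
    by rewrite hrel ?est // (fsubset_trans sW WS).
  case/imfsetP => s /=; rewrite in_filt => /andP[sS sW] ->.
  rewrite in_filt -hrel ?(fsubset_trans sW WS) // sS /=.
  apply/fsubsetP => y /imfsetP [x /= xs ->]; apply/imfsetP; exists x => //.
  exact: (fsubsetP sW).
symmetry; apply/eqP/card_in_imfsetP => s t; rewrite !in_filt => /andP[_ sW] /andP[_ tW].
by apply: imfset_inj_sub inj _ _; apply: fsubset_trans WS.
Qed.

Definition amalg (D C : struct L) : struct L :=
  Struct (dom D `|` dom C) (fun E => Defs.rel D E `|` Defs.rel C E).

Lemma filt_wf (S : struct L) X E : wf ar S ->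
  filt (Defs.rel S E) X = filt (Defs.rel S E) (X `&` dom S).
Proof.
move=> w; apply/fsetP => s; rewrite !in_filt fsubsetI.
by case: (boolP (s \in Defs.rel S E)) => // /w [-> _]; rewrite andbT.
Qed.

Section Amalg.
Variables (B D C : struct L).
Hypotheses (wD : wf ar D) (wC : wf ar C) (sBD : sub B D) (sBC : sub B C)
  (hI : dom D `&` dom C = dom B).

Lemma wf_amalg : wf ar (amalg D C).
Proof.
move=> E s /=; rewrite in_fsetU => /orP[/wD [h1 h2]|/wC [h1 h2]]; split => //.
  exact: fsubset_trans h1 (fsubsetUl _ _).
exact: fsubset_trans h1 (fsubsetUr _ _).
Qed.

Lemma sub_amalg : sub D (amalg D C).
Proof.
split; first exact: fsubsetUl.
move=> E; apply/fsetP => s; rewrite -/(filt _ _) in_filt /= in_fsetU.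
case: (boolP (s \in Defs.rel D E)) => sD /=.
  by case/wD: sD => ->.
apply/esym/negbTE/negP => /andP[sC sDD]; move: sD; apply/negP/negPn.
have sB : s `<=` dom B by rewrite -hI fsubsetI sDD; case/wC: sC.
move: sBD => [_ h]; have : s \in Defs.rel B E.
  by move: sBC => [_ ->]; rewrite -/(filt _ _) in_filt sC.
by rewrite h -/(filt _ _) in_filt => /andP[].
Qed.

Lemma d_amalg X : X `<=` dom D `|` dom C ->
  d (amalg D C) X = d D (X `&` dom D) + d C (X `&` dom C) - d B (X `&` dom B).
Proof.
move=> XU.
have hc : (#|` X|)%:R + (#|` X `&` dom B|)%:R =
          (#|` X `&` dom D|)%:R + (#|` X `&` dom C|)%:R :> R.
  rewrite -!natrD; congr (_%:R); rewrite -[in RHS]cardfsUI -fsetIUr (fsetIidPl XU).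
  by rewrite fsetIACA fsetIid hI.
have hs : forall E, (#|` filt (Defs.rel (amalg D C) E) X| + #|` filt (Defs.rel B E) (X `&` dom B)|)%N =
   (#|` filt (Defs.rel D E) (X `&` dom D)| + #|` filt (Defs.rel C E) (X `&` dom C)|)%N.
  move=> E; rewrite -(filt_wf _ _ wD) -(filt_wf _ _ wC) -[in RHS]cardfsUI; congr (_ + _)%N; apply: congr1.
    apply/eqP/fset_eqP => s; rewrite in_fsetU !in_filt /= in_fsetU.
    by case: (s `<=` X); rewrite ?andbT ?andbF.
  move: (sBD) (sBC) => [_ hD] [_ hC].
  apply/eqP/fset_eqP => s; rewrite in_fsetI !in_filt fsubsetI.
  apply/idP/idP.
    case/andP=> sB /andP[sX sBB].
    have : s \in Defs.rel B E by [].
    rewrite {1}hD -/(filt _ _) in_filt => /andP[-> _].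
    by move: sB; rewrite hC -/(filt _ _) in_filt => /andP[-> _]; rewrite sX.
  case/andP=> /andP[sD sX] /andP[sC _]; rewrite sX /=.
  have sBB : s `<=` dom B by rewrite -hI fsubsetI; case/wD: sD => ->; case/wC: sC => ->.
  by rewrite sBB andbT hD -/(filt _ _) in_filt sD.
have hs' : \sum_E alpha E * (#|` filt (Defs.rel (amalg D C) E) X|)%:R +
   \sum_E alpha E * (#|` filt (Defs.rel B E) (X `&` dom B)|)%:R =
   \sum_E alpha E * (#|` filt (Defs.rel D E) (X `&` dom D)|)%:R +
   \sum_E alpha E * (#|` filt (Defs.rel C E) (X `&` dom C)|)%:R.
  rewrite -!big_split /=; apply: eq_bigr => E _.
  by rewrite -!mulrDr -!natrD; move: (hs E) => /= ->.
rewrite /d; lra.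
Qed.
End Amalg.

Lemma le_sum_seq (s : seq nat) x : x \in s -> (x <= \sum_(y <- s) y)%N.
Proof.
elim: s => // a s IH; rewrite in_cons big_cons => /orP[/eqP ->|/IH h].
  exact: leq_addr.
exact: leq_trans h (leq_addl _ _).
Qed.

Section Copy.
Variables (B C D : struct L).
Hypotheses (wC : wf ar C) (sBC : sub B C) (sBD : sub B D)
  (hess : forall X, X `<=` dom C -> X != dom C -> d B (X `&` dom B) <= d C X).

Let M := (\sum_(y <- dom D) y).+1.
Let psi x := if x \in dom B then x else (x + M)%N.

Let ltM x : x \in dom D -> (x < M)%N.
Proof. by move=> h; rewrite ltnS le_sum_seq. Qed.

Let BD : dom B `<=` dom D. Proof. by case: sBD. Qed.
Let BC : dom B `<=` dom C. Proof. by case: sBC. Qed.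

Let psiB x : x \in dom B -> psi x = x.
Proof. by rewrite /psi => ->. Qed.

Let psiD x : psi x \in dom D -> x \in dom B.
Proof.
rewrite /psi; case: ifP => // _ h; have := ltM h.
by rewrite ltnNge leq_addl.
Qed.

Let psi_inj : injective psi.
Proof.
have key : forall x y, x \in dom B -> y \notin dom B -> psi x <> psi y.
  move=> x y xB yB; rewrite psiB // /psi (negbTE yB) => exy.
  have := ltM (fsubsetP BD x xB); rewrite exy ltnNge leq_addl //.
move=> x y; case: (boolP (x \in dom B)) => xB; case: (boolP (y \in dom B)) => yB.
- by rewrite !psiB.
- by move/(key _ _ xB yB).
- by move/esym/(key _ _ yB xB).
- by rewrite /psi (negbTE xB) (negbTE yB) => /addIn.
Qed.

Let psi_inj_in (S : {fset nat}) : {in S &, injective psi}.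
Proof. by move=> x y _ _; apply: psi_inj. Qed.

Let psi_id (s : {fset nat}) : s `<=` dom B -> psi @` s = s.
Proof.
move=> sB; rewrite -[RHS]imfset_id; apply: eq_in_imfset => x xs.
by rewrite psiB // (fsubsetP sB).
Qed.

Let C' : struct L :=
  Struct (psi @` dom C) (fun E => (fun s : {fset nat} => psi @` s) @` Defs.rel C E).

Let hrel E s : s `<=` dom C -> (s \in Defs.rel C E) = (psi @` s \in Defs.rel C' E).
Proof.
move=> sC /=; apply/idP/imfsetP => [h|[t tC /= e]]; first by exists s.
have tC' : t `<=` dom C by case/wC: tC.
by rewrite (imfset_inj_sub (@psi_inj_in (dom C)) sC tC' e).
Qed.

Lemma copy_ok : exists C' : struct L,
  [/\ wf ar C', sub B C', dom D `&` dom C' = dom B, #|` dom C'| = #|` dom C|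
    & d C' (dom C') = d C (dom C) /\
      forall Z, Z `<=` dom C' -> Z != dom C' -> d B (Z `&` dom B) <= d C' Z].
Proof.
exists C'; split; last split.
- move=> E s /= /imfsetP [t tC ->]; case/wC: tC => tC' <-; split.
    apply/fsubsetP => y /imfsetP [x /= xt ->]; apply/imfsetP; exists x => //.
    exact: (fsubsetP tC').
  exact: card_inj (@psi_inj_in (dom C)) tC'.
- split.
    apply/fsubsetP => x xB; apply/imfsetP; exists x; first exact: (fsubsetP BC).
    by rewrite psiB.
  move=> E; apply/fsetP => s; rewrite -/(filt _ _) in_filt.
  move: (sBC) => [_ hC]; rewrite hC -/(filt _ _) in_filt.
  apply/idP/idP.
    case/andP=> sC sB; rewrite sB andbT -(psi_id sB) -hrel //.
    by case/wC: sC.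
  case/andP => /imfsetP [t tC /= ->] sB.
  have tB : t `<=` dom B.
    apply/fsubsetP => x xt; apply: psiD; apply: (fsubsetP BD).
    by apply: (fsubsetP sB); apply/imfsetP; exists x.
  by rewrite psi_id // tC tB.
- apply/eqP; rewrite eqEfsubset; apply/andP; split.
    apply/fsubsetP => x; rewrite in_fsetI => /andP[xD /imfsetP [y yC /= exy]].
    by move: xD; rewrite exy => /psiD yB; rewrite psiB.
  rewrite fsubsetI BD /=; apply/fsubsetP => x xB; apply/imfsetP; exists x.
    exact: (fsubsetP BC).
  by rewrite psiB.
- exact: card_inj (@psi_inj_in (dom C)) (fsubset_refl _).
- by rewrite -(d_iso (@psi_inj_in (dom C)) hrel (fsubset_refl _)).
move=> Z ZC' ZN.
pose Z0 := [fset x in dom C | psi x \in Z].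
have Z0C : Z0 `<=` dom C by apply/fsubsetP => x; rewrite !inE => /andP[].
have eZ : psi @` Z0 = Z.
  apply/eqP; rewrite eqEfsubset; apply/andP; split.
    by apply/fsubsetP => y /imfsetP [x /=]; rewrite !inE => /andP[_ h] ->.
  apply/fsubsetP => y yZ; have /imfsetP [x xC exy] := fsubsetP ZC' y yZ.
  by apply/imfsetP; exists x => //=; rewrite !inE xC -exy yZ.
have eB : Z0 `&` dom B = Z `&` dom B.
  apply/eqP; rewrite eqEfsubset; apply/andP; split; apply/fsubsetP => x;
    rewrite !in_fsetI.
    by rewrite !inE => /andP[/andP[_ h] xB]; rewrite xB andbT -(psiB xB).
  case/andP=> xZ xB; rewrite xB andbT !inE (fsubsetP BC _ xB) /=.
  by rewrite psiB.
rewrite -eB -eZ -(d_iso (@psi_inj_in (dom C)) hrel Z0C); apply: hess => //; apply: contraNneq ZN => e.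
by rewrite -eZ e.
Qed.
End Copy.

Section Build.
Variables (B C : struct L) (g : R).
Hypotheses (wB : wf ar B) (wC : wf ar C) (sBC : sub B C)
  (hg : d C (dom C) = d B (dom B) - g) (hg0 : 0 <= g)
  (hess : forall X, X `<=` dom C -> X != dom C -> d B (X `&` dom B) <= d C X).

Definition Inv (k : nat) (D : struct L) :=
  [/\ wf ar D, sub B D, d D (dom D) = d B (dom B) - k%:R * g,
    (forall X, X `<=` dom D -> ~~ (dom B `<=` X) || (#|` X| < #|` dom C|)%N ->
       d B (X `&` dom B) <= d D X)
  & (forall X, X `<=` dom D -> dom B `<=` X ->
       d B (dom B) - k%:R * g <= d D X /\
       (X != dom D -> d B (dom B) - (k%:R - 1) * g <= d D X))].

Lemma IB (X U : {fset nat}) : dom B `<=` U -> X `&` U `&` dom B = X `&` dom B.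
Proof. by move=> h; rewrite -fsetIA (fsetIidPr h). Qed.

Lemma build k : exists D, Inv k D.
Proof.
elim: k => [|k [D [wD sBD dD hA hB]]].
  exists B; split => //.
  - exact: sub_refl.
  - by rewrite mulr0n mul0r subr0.
  - by move=> X XB _; rewrite (fsetIidPl XB).
  move=> X XB BX; have -> : X = dom B by apply/eqP; rewrite eqEfsubset XB BX.
  by rewrite eqxx mul0r subr0 lexx; split.
have BD : dom B `<=` dom D by case: sBD.
have BC : dom B `<=` dom C by case: sBC.
have [C' [wC' sBC' hI cC' [dC' hC']]] := copy_ok wC sBC sBD hess.
have BC' : dom B `<=` dom C' by case: sBC'.
have sDD' := sub_amalg wD wC' sBD sBC' hI.
have dA := d_amalg wD wC' sBD sBC' hI.
exists (amalg D C'); split.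
- exact: wf_amalg.
- exact: sub_trans sBD sDD'.
- rewrite dA ?fsubset_refl //= (fsetIidPr (fsubsetUl _ _)).
  rewrite (fsetIidPr (fsubsetUr _ _)) (fsetIidPr (fsubset_trans BD (fsubsetUl _ _))).
  rewrite dC' hg dD -addn1 natrD mulrDl mul1r; lra.
- move=> X XD' hX; rewrite dA // -(IB X BD).
  have ZN : X `&` dom C' != dom C'.
    apply/negP => /eqP e; move: hX => /orP[/negP []|].
      by apply: fsubset_trans BC' _; rewrite -e fsubsetIl.
    rewrite -cC' -e ltnNge fsubset_leq_card //; exact: fsubsetIl.
  have := hC' _ (fsubsetIr _ _) ZN; rewrite (IB X BC') (IB X BD) => h1.
  have : d B (X `&` dom D `&` dom B) <= d D (X `&` dom D).
    apply: hA; first exact: fsubsetIr.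
    move: hX => /orP[h|h]; apply/orP; [left|right].
      by apply: contra h => h'; apply: fsubset_trans h' (fsubsetIl _ _).
    exact: leq_ltn_trans (fsubset_leq_card (fsubsetIl _ _)) h.
  rewrite (IB X BD) => h2; lra.
move=> X XD' BX; rewrite dA //.
have eXB : X `&` dom B = dom B by apply/fsetIidPr.
rewrite eXB.
have BY : dom B `<=` X `&` dom D by rewrite fsubsetI BX BD.
have [hY1 hY2] := hB _ (fsubsetIr _ _) BY.
have hZ : X `&` dom C' != dom C' -> d B (dom B) <= d C' (X `&` dom C').
  by move=> ZN; have := hC' _ (fsubsetIr _ _) ZN; rewrite (IB X BC') eXB.
rewrite -addn1 natrD mulrDl mul1r; move: hY2; rewrite mulrBl mul1r => hY2; case: (boolP (X `&` dom C' == dom C')) => [/eqP eZ|ZN].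
  have YN : X != dom (amalg D C') -> X `&` dom D != dom D.
    move=> XN; apply: contraNneq XN => eY; rewrite eqEfsubset XD' /=.
    by rewrite -eY -eZ -fsetIUr fsubsetIl.
  rewrite eZ dC' hg; move: hY1 hY2 YN.
  set a := d D _; set c := d B _ => hY1 hY2 YN.
  rewrite addrK; set kg := k%:R * g in hY1 hY2 *.
  split; first lra.
  by move=> XN; have := hY2 (YN XN); lra.
have := hZ ZN; move: hY1 hY2.
set a := d D _; set b := d C' _; set c := d B _ => hY1 hY2 H.
rewrite addrK; set kg := k%:R * g in hY1 hY2 *.
have h0 : 0 <= g := hg0.
by split => [|_]; lra.
Qed.
End Build.
End H.

Theorem lemma3p32 (L : finType) (ar : L -> nat) (R : realType) (alpha : L -> R)
  (har : forall E, (2 <= ar E)%N)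
  (halpha : forall E, 0 < alpha E <= 1)
  (hnot : ~ ((forall E, ar E = 2%N) /\ (forall E, alpha E = 1)))
  (A B C : struct L)
  (hA : inK ar alpha A) (hB : inK ar alpha B) (hAB : le alpha A B)
  (hBC : essential ar alpha B C) :
  let gamma := - deltaRel alpha C (dom C) (dom B) in
  (exists D : struct L,
     [/\ inK ar alpha D, sub B D, le alpha A D,
         0 <= deltaRel alpha D (dom D) (dom A) < gamma
       & forall G : struct L, wf ar G -> minpair alpha B G ->
           (#|` dom G| < #|` dom C|)%N -> ~ embeds_over B G D])
  /\
  (gamma <= delta alpha A ->
   exists D : struct L,
     [/\ inK ar alpha D, sub B D, essential ar alpha A D
       & - gamma <= deltaRel alpha D (dom D) (dom A) < 0]).
Proof.
move=> gamma.
have alpha_ge0 : forall E, 0 <= alpha E by move=> E; case/andP: (halpha E) => /ltW.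
case: (hBC) => [[_ hBpos] [wC hCd] sBC mpBC hessC].
case: (hB) => [wB hBd]; case: (hAB) => [sAB leAB].
have AB : dom A `<=` dom B by case: sAB.
have BC : dom B `<=` dom C by case: sBC.
set dB := d alpha B (dom B); set dA := d alpha B (dom A).
have dBdef : delta alpha B = dB := delta_sub alpha (sub_refl wB).
have dAdef : delta alpha A = dA := delta_sub alpha sAB.
have leAB' : forall X, dom A `<=` X -> X `<=` dom B -> dA <= d alpha B X.
  by move=> X h1 h2; rewrite -dAdef -deltaE; apply: leAB.
have hA0 : 0 <= dA by rewrite /dA -deltaE; apply: hBd.
have gE : d alpha C (dom C) = dB - gamma.
  rewrite /gamma /deltaRel !deltaE (elimT (fsetUidPl _ _) BC) /dB (d_sub alpha sBC (fsubset_refl _)).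
  lra.
have hessC' : forall X, X `<=` dom C -> X != dom C ->
    d alpha B (X `&` dom B) <= d alpha C X.
  move=> X XC XN; have := hessC X; rewrite fproperEneq XN XC => /(_ isT).
  rewrite /deltaRel !deltaE (elimT (fsetUidPl _ _) (fsubsetIl _ _)).
  by rewrite -(d_sub alpha sBC (fsubsetIr _ _)) subr_ge0.
have gpos : 0 < gamma.
  rewrite ltNge; apply/negP => hg; case: mpBC => _ _; apply; split => //.
  move=> X BX XC; rewrite dBdef deltaE.
  case: (boolP (X == dom C)) => [/eqP ->|XN]; first by rewrite gE; lra.
  by have := hessC' X XC XN; rewrite (fsetIidPr BX).
have hBA : 0 <= dB - dA by rewrite subr_ge0; apply: leAB'.
set k := Num.truncn ((dB - dA) / gamma).
have /andP[hk1 hk2] := Num.Theory.truncn_itv (divr_ge0 hBA (ltW gpos)).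
rewrite -/k ler_pdivlMr // ltr_pdivrMr // in hk1 hk2.
rewrite -addn1 natrD mulrDl mul1r in hk2.
have hkS : (k.+1)%:R * gamma = k%:R * gamma + gamma by rewrite -addn1 natrD mulrDl mul1r.
have hkS' : ((k.+1)%:R - 1) * gamma = k%:R * gamma by rewrite -addn1 natrD addrK.
have drel : forall D : struct L, sub B D -> deltaRel alpha D (dom D) (dom A) =
    d alpha D (dom D) - dA.
  move=> D sBD; have DA : dom A `<=` dom D by apply: fsubset_trans AB _; case: sBD.
  rewrite /deltaRel !deltaE (elimT (fsetUidPl _ _) DA).
  by rewrite -(d_sub alpha sBD AB).
have gpos' : 0 <= gamma := ltW gpos.
split.
  have [D [wD sBD dD hA1 hB1]] := build wB wC sBC gE gpos' hessC' k.
  rewrite -/dB in dD hB1.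
  have BD : dom B `<=` dom D by case: sBD.
  exists D; split => //.
  - split => // X XD; rewrite deltaE.
    case: (boolP (dom B `<=` X)) => BX.
      have := (hB1 X XD BX).1; lra.
    have := hA1 X XD; rewrite BX => /(_ isT); apply: le_trans.
    by rewrite -deltaE; apply: hBd; apply: fsubsetIr.
  - split; first exact: sub_trans sAB sBD.
    move=> X AX XD; rewrite dAdef deltaE.
    case: (boolP (dom B `<=` X)) => BX.
      have := (hB1 X XD BX).1; lra.
    have := hA1 X XD; rewrite BX => /(_ isT); apply: le_trans.
    by apply: leAB'; rewrite ?fsubsetI ?AX ?AB // fsubsetIr.
  - rewrite drel // dD; apply/andP; split; lra.
  move=> G wG [sBG _ nle] hcard [f [finj fB fD frel]]; apply: nle.
  split => // W BW WG; rewrite dBdef deltaE (d_iso alpha finj frel WG).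
  have fWD : f @` W `<=` dom D.
    by apply/fsubsetP => y /imfsetP [x xW ->]; apply: fD; apply: (fsubsetP WG).
  have BfW : dom B `<=` f @` W.
    apply/fsubsetP => x xB; apply/imfsetP; exists x; first exact: (fsubsetP BW).
    by rewrite fB.
  have := hA1 _ fWD; rewrite (fsetIidPr BfW); apply; apply/orP; right.
  rewrite (card_inj finj WG); apply: leq_ltn_trans hcard.
  exact: fsubset_leq_card.
move=> hgA; rewrite dAdef in hgA.
have [D [wD sBD dD hA1 hB1]] := build wB wC sBC gE gpos' hessC' k.+1.
rewrite -/dB in dD hB1.
have BD : dom B `<=` dom D by case: sBD.
have AD : dom A `<=` dom D by apply: fsubset_trans AB BD.
have sAD : sub A D by apply: sub_trans sAB sBD.
rewrite hkS in dD; rewrite hkS hkS' in hB1.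
have inKD : inK ar alpha D.
  split => // X XD; rewrite deltaE.
  case: (boolP (dom B `<=` X)) => BX.
    have := (hB1 X XD BX).1; lra.
  have := hA1 X XD; rewrite BX => /(_ isT); apply: le_trans.
  by rewrite -deltaE; apply: hBd; apply: fsubsetIr.
exists D; split => //; last by rewrite drel // dD; apply/andP; split; lra.
split => //.
- by split => //; rewrite dAdef; lra.
- split => //.
    move=> X AX XD; split; first exact: sub_induced sAD AX (fproper_sub XD).
    move=> Y AY YX; rewrite dAdef deltaE d_induced //.
    have YD : Y `<=` dom D := fsubset_trans YX (fproper_sub XD).
    have YN : Y != dom D.
      apply/negP => /eqP eY; move: (XD); rewrite fproperEneq => /andP[/negP []].
      by rewrite eqEfsubset (fproper_sub XD) -eY YX.
    case: (boolP (dom B `<=` Y)) => BY.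
      have := (hB1 Y YD BY).2 YN; lra.
    have := hA1 Y YD; rewrite BY => /(_ isT); apply: le_trans.
    by apply: leAB'; rewrite ?fsubsetI ?AY ?AB // fsubsetIr.
  move=> [_ h]; have := h (dom D) AD (fsubset_refl _).
  rewrite dAdef deltaE dD; lra.
move=> X XD; rewrite /deltaRel !deltaE (elimT (fsetUidPl _ _) (fsubsetIl _ _)).
have XAB : X `&` dom A `<=` dom B := fsubset_trans (fsubsetIr _ _) AB.
rewrite -(d_sub alpha sBD XAB) subr_ge0.
have XD' : X `<=` dom D := fproper_sub XD.
case: (boolP (dom B `<=` X)) => BX.
  rewrite (fsetIidPr (fsubset_trans AB BX)) -/dA.
  have XN : X != dom D by move: XD; rewrite fproperEneq => /andP[].
  have := (hB1 X XD' BX).2 XN; lra.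
have := hA1 X XD'; rewrite BX => /(_ isT) h1.
have := submod alpha_ge0 B (X `&` dom B) (dom A).
have -> : X `&` dom B `&` dom A = X `&` dom A.
  by rewrite -fsetIA (fsetIidPr AB).
have := leAB' (X `&` dom B `|` dom A) (fsubsetUr _ _).
rewrite fsubUset fsubsetIr AB => /(_ isT) h2 h3.
rewrite -/dA in h3; lra.
Qed.
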